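(* There is a universal constant $C$ such that for all $\rho_0,\rho_1,\rho_2>0$, all $\Theta_{01},\Theta_{02},\Theta_{12}\in[0,\pi/2]$, and $j\in\{1,2\}$, $$\frac{\partial\Phi_0(\rho_0,\rho_1,\rho_2;\Theta_{01},\Theta_{02},\Theta_{12})}{\partial(\log\rho_j)}\le C\,\Phi_0(\rho_0,\rho_1,\rho_2;\Theta_{01},\Theta_{02},\Theta_{12}).$$
   Context: Given $\rho_0,\rho_1,\rho_2>0$ and $\Theta_{ij}\in[0,\pi/2]$ for $(i,j)\in\{(0,1),(0,2),(1,2)\}$, there is a configuration of three closed disks $D_0,D_1,D_2$ in $\mathbb{C}$, unique up to euclidean isometries, with euclidean radii $\rho(D_k)=\rho_k$ and with the dihedral angle of $D_i$ and $D_j$ equal to $\Theta_{ij}$ (the dihedral angle of two intersecting disks $D,D'$ being the angle in $[0,\pi)$ between the clockwise tangent of $\partial D$ and the counterclockwise tangent of $\partial D'$ at a point of $\partial D\cap\partial D'$). Let $A_k$ be the center of $D_k$, and let $\Phi_k(\rho_0,\rho_1,\rho_2;\Theta_{01},\Theta_{02},\Theta_{12})$ be the angle of the triangle $A_0A_1A_2$ at $A_k$. *)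

(* Defs.v *)
From Stdlib Require Import Reals.
From Coquelicot Require Import Coquelicot.
Open Scope R_scope.

(* Distance between the centers of two closed disks with radii ri, rj
   meeting at dihedral angle Th (Th = 0: externally tangent,
   Th = PI/2: orthogonal):  |A_i A_j|^2 = ri^2 + rj^2 + 2 ri rj cos Th. *)
Definition center_dist (ri rj Th : R) : R :=
  sqrt (ri ^ 2 + rj ^ 2 + 2 * ri * rj * cos Th).

Definition tri_angle (a b c : R) : R :=
  acos ((a ^ 2 + b ^ 2 - c ^ 2) / (2 * a * b)).

(* Phi_0(rho0,rho1,rho2;Th01,Th02,Th12): angle at A_0 of the triangle of
   centers A_0 A_1 A_2. *)
Definition Phi0 (r0 r1 r2 T01 T02 T12 : R) : R :=
  tri_angle (center_dist r0 r1 T01) (center_dist r0 r2 T02)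
            (center_dist r1 r2 T12).

Definition Phi0_log (j : nat) (r0 r1 r2 T01 T02 T12 : R) (t : R) : R :=
  Phi0 r0 (if Nat.eqb j 1 then exp t else r1)
          (if Nat.eqb j 2 then exp t else r2) T01 T02 T12.

Definition rho_of (j : nat) (r1 r2 : R) : R :=
  if Nat.eqb j 1 then r1 else r2.

(* Main.v *)
Require Import Defs.
From Stdlib Require Import Reals.
From Coquelicot Require Import Coquelicot.
From Stdlib Require Import Lra Psatz.
Open Scope R_scope.

Lemma q00 x v w : 0 <= x <= 1 -> 0 <= v -> 0 <= w -> 0 <= (1-x*x)*v*v + (x*x-1)*v*w + (1+2*x)*w*w.
Proof. intros. 
  replace ((1-x*x)*v*v + (x*x-1)*v*w + (1+2*x)*w*w)
   with ((1-x*x)*((v-w/2)*(v-w/2)) + (3/4 + 2*x + x*x/4)*(w*w)) by field.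
  assert (0 <= 1 - x*x) by nra. 
  apply Rplus_le_le_0_compat; apply Rmult_le_pos; try lra; try apply Rle_0_sqr; try nra. Qed.
Lemma qd (x y z v w : R) : 0 <= x <= 1 -> 0 <= y <= 1 -> 0 <= z <= 1 -> 0 <= v -> 0 <= w ->
 0 <= (1 - x*x)*v*v + (x*x+2*x*y+x*z+y+2*z-1)*v*w + (1 - y*y + x*(2-y) + z*(2*y-1))*w*w.
Proof. intros.
set (Q y z := (1 - x*x)*v*v + (x*x+2*x*y+x*z+y+2*z-1)*v*w + (1 - y*y + x*(2-y) + z*(2*y-1))*w*w).
assert (E: Q y z = (1-z)*((1-y)*Q 0 0 + y*Q 1 0) + z*((1-y)*Q 0 1 + y * Q 1 1) + y*(1-y)*w*w) by (unfold Q; ring).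
assert (0 <= Q 0 0). { pose proof (q00 x v w). unfold Q. cbv beta. 
  replace (x * x + 2 * x * 0 + x * 0 + 0 + 2 * 0 - 1) with (x*x-1) by ring.
  replace (1 - 0 * 0 + x * (2 - 0) + 0 * (2 * 0 - 1)) with (1+2*x) by ring. tauto. }
assert (0 <= 1 - x*x) by nra.
assert (0 <= v*v) by nra. assert (0 <= v*w) by nra. assert (0 <= w*w) by nra.
assert (0 <= Q 1 0). { unfold Q. cbv beta.
  replace ((1 - x * x) * v * v + (x * x + 2 * x * 1 + x * 0 + 1 + 2 * 0 - 1) * v * w + (1 - 1 * 1 + x * (2 - 1) + 0 * (2 * 1 - 1)) * w * w)
  with ((1-x*x)*(v*v) + (x*x+2*x)*(v*w) + x*(w*w)) by ring.
  repeat apply Rplus_le_le_0_compat; apply Rmult_le_pos; nra. }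
assert (0 <= Q 0 1). { unfold Q. cbv beta.
  replace ((1 - x * x) * v * v + (x * x + 2 * x * 0 + x * 1 + 0 + 2 * 1 - 1) * v * w + (1 - 0 * 0 + x * (2 - 0) + 1 * (2 * 0 - 1)) * w * w)
  with ((1-x*x)*(v*v) + (x*x+x+1)*(v*w) + (2*x)*(w*w)) by ring.
  repeat apply Rplus_le_le_0_compat; apply Rmult_le_pos; nra. }
assert (0 <= Q 1 1). { unfold Q. cbv beta.
  replace ((1 - x * x) * v * v + (x * x + 2 * x * 1 + x * 1 + 1 + 2 * 1 - 1) * v * w + (1 - 1 * 1 + x * (2 - 1) + 1 * (2 * 1 - 1)) * w * w)
  with ((1-x*x)*(v*v) + (x*x+3*x+2)*(v*w) + (x+1)*(w*w)) by ring.
  repeat apply Rplus_le_le_0_compat; apply Rmult_le_pos; nra. }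
change (0 <= Q y z). rewrite E.
assert (0 <= (1-y)*Q 0 0 + y*Q 1 0) by nra.
assert (0 <= (1-y)*Q 0 1 + y*Q 1 1) by nra.
assert (0 <= y*(1-y)*w*w). { apply Rmult_le_pos; [|lra]. apply Rmult_le_pos; nra. }
nra.
Qed.

Lemma Tpos (u v w x y z : R) : 0 <= u -> 0 <= v -> 0 <= w ->
  0 <= x <= 1 -> 0 <= y <= 1 -> 0 <= z <= 1 ->
  let P := v + u*x in let Q := v + w*z in let s := x*z+y in
  let H4 := w*w*(1-z*z)*P*P + u*u*(1-x*x)*Q*Q + 2*u*w*P*Q*s + u*u*w*w*((1-x*x)*(1-z*z)-s*s) in
  let K := w*P*s + u*(1-x*x)*Q in
  u*v*(u+w)*K <= (u+v)*H4.
Proof.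
  intros Hu Hv Hw Hx Hy Hz P Q s H4 K.
  pose proof (qd x y z v w Hx Hy Hz Hv Hw) as HQ.
  set (c3 := - x*z + 2*x + 2*y*z - y - z*z + 1).
  assert (Hc3 : 0 <= c3).
  { replace c3 with ((1-y)*(x*(2-z)+(1-z*z)) + y*(x*(2-z) + z*(2-z))) by (unfold c3; ring).
    apply Rplus_le_le_0_compat; apply Rmult_le_pos; nra. }
  assert (E : (u+v)*H4 - u*v*(u+w)*K =
    (u*u*u*(w*w))*(1-y*y) + (u*u*u*v*w)*(x*y+z) + (2*u*v*v*v*w)*(x*z+y) + (u*v*v*w*w)*c3
    + (v*v*v*w*w)*(1-z*z) + (u*u*v)*((1 - x*x)*v*v + (x*x+2*x*y+x*z+y+2*z-1)*v*w + (1 - y*y + x*(2-y) + z*(2*y-1))*w*w)).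
  { unfold H4, K, P, Q, s, c3. ring. }
  assert (0 <= u*u*u*(w*w)) by (repeat apply Rmult_le_pos; lra).
  assert (0 <= u*u*u*v*w) by (repeat apply Rmult_le_pos; lra).
  assert (0 <= 2*u*v*v*v*w) by (repeat apply Rmult_le_pos; lra).
  assert (0 <= u*v*v*w*w) by (repeat apply Rmult_le_pos; lra).
  assert (0 <= v*v*v*w*w) by (repeat apply Rmult_le_pos; lra).
  assert (0 <= u*u*v) by (repeat apply Rmult_le_pos; lra).
  assert (0 <= (u*u*u*(w*w))*(1-y*y)) by (apply Rmult_le_pos; nra).
  assert (0 <= (u*u*u*v*w)*(x*y+z)) by (apply Rmult_le_pos; nra).
  assert (0 <= (2*u*v*v*v*w)*(x*z+y)) by (apply Rmult_le_pos; nra).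
  assert (0 <= (u*v*v*w*w)*c3) by (apply Rmult_le_pos; nra).
  assert (0 <= (v*v*v*w*w)*(1-z*z)) by (apply Rmult_le_pos; nra).
  assert (0 <= (u*u*v)*((1 - x*x)*v*v + (x*x+2*x*y+x*z+y+2*z-1)*v*w + (1 - y*y + x*(2-y) + z*(2*y-1))*w*w)) by (apply Rmult_le_pos; nra).
  lra.
Qed.
Lemma key (u v w x y z a b : R) : 0 < u -> 0 < v -> 0 < w ->
  0 <= x <= 1 -> 0 <= y <= 1 -> 0 <= z <= 1 -> 0 < a -> 0 < b ->
  a*a = u*u+v*v+2*u*v*x -> b*b = u*u+w*w+2*u*w*y ->
  let A := u*u+v*v+2*u*v*x in let B := u*u+w*w+2*u*w*y in let C := v*v+w*w+2*v*w*z in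
  0 < 4*A*B - (A+B-C)*(A+B-C) ->
  b * (2*A*(v*v+v*w*z) - (A+C-B)*(v*v+u*v*x)) <= a * (4*A*B - (A+B-C)*(A+B-C)).
Proof.
  intros Hu Hv Hw Hx Hy Hz Ha Hb Ea Eb A B C HH.
  pose proof (Tpos u v w x y z ltac:(lra) ltac:(lra) ltac:(lra) Hx Hy Hz) as HT. cbv zeta in HT.
  set (P := v + u*x) in *. set (Q := v + w*z) in *. set (s := x*z+y) in *.
  set (H4 := w*w*(1-z*z)*P*P + u*u*(1-x*x)*Q*Q + 2*u*w*P*Q*s + u*u*w*w*((1-x*x)*(1-z*z)-s*s)) in *.
  set (K := w*P*s + u*(1-x*x)*Q) in *.
  assert (EF : 2*A*(v*v+v*w*z) - (A+C-B)*(v*v+u*v*x) = 2*u*v*K).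
  { unfold A, B, C, K, P, Q, s. ring. }
  assert (EH : 4*A*B - (A+B-C)*(A+B-C) = 4*H4).
  { unfold A, B, C, H4, P, Q, s. ring. }
  rewrite EF, EH. rewrite EH in HH.
  assert (HK : 0 <= K).
  { unfold K, P, Q, s. assert (0 <= 1-x*x) by nra.
    apply Rplus_le_le_0_compat; repeat apply Rmult_le_pos; nra. }
  assert (0 <= (u*w)*(1-y)) by (apply Rmult_le_pos; nra).
  assert (0 <= (u*v)*(1+x)) by (apply Rmult_le_pos; nra).
  assert (Hbu : b <= u + w) by (apply Rsqr_incr_0_var; unfold Rsqr; nra).
  assert (0 <= (u-v)*(u-v)) by apply Rle_0_sqr.
  assert (Hau : u + v <= 2*a) by (apply Rsqr_incr_0_var; unfold Rsqr; nra).
  assert (0 <= u*v) by nra.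
  assert (b * (2*u*v*K) <= (u+w)*(2*u*v*K)).
  { apply Rmult_le_compat_r; [|lra]. repeat apply Rmult_le_pos; lra. }
  assert ((u+v)*H4 <= 2*a*H4) by (apply Rmult_le_compat_r; lra).
  lra.
Qed.

Lemma final_alg (u v w x y z a b : R) : 0 < u -> 0 < v -> 0 < w ->
  0 <= x <= 1 -> 0 <= y <= 1 -> 0 <= z <= 1 -> 0 < a -> 0 < b ->
  a*a = u*u+v*v+2*u*v*x -> b*b = u*u+w*w+2*u*w*y ->
  let C := v*v+w*w+2*v*w*z in let N := a*a + b*b - C in
  0 < 4*(a*a)*(b*b) - N*N ->
  let A' := 2*v*v+2*u*v*x in let C' := 2*v*v+2*v*w*z in
  - ((A'-C')/(2*a*b) - N*A'/(4*a^3*b)) <= 2*(1 - (N/(2*a*b))²).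
Proof.
  intros Hu Hv Hw Hx Hy Hz Ha Hb Ea Eb C N HH A' C'.
  assert (HH' : 0 < 4*(u*u+v*v+2*u*v*x)*(u*u+w*w+2*u*w*y) - ((u*u+v*v+2*u*v*x)+(u*u+w*w+2*u*w*y)-C)*((u*u+v*v+2*u*v*x)+(u*u+w*w+2*u*w*y)-C)).
  { rewrite <- Ea, <- Eb. exact HH. }
  pose proof (key u v w x y z a b Hu Hv Hw Hx Hy Hz Ha Hb Ea Eb HH') as K.
  cbv zeta in K. rewrite <- Ea, <- Eb in K. fold C in K. fold N in K.
  set (F := 2 * (a * a) * (v * v + v * w * z) - (a * a + C - b * b) * (v * v + u * v * x)) in K.
  assert (E : 2*(1 - (N/(2*a*b))²) - - ((A'-C')/(2*a*b) - N*A'/(4*a^3*b))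
     = (2*a*(4*(a*a)*(b*b) - N*N) - 2*b*F)/(4*a^3*b^2)).
  { unfold F, N, A', C', Rsqr. field. lra. }
  assert (0 <= (2*a*(4*(a*a)*(b*b) - N*N) - 2*b*F)/(4*a^3*b^2)).
  { apply Rmult_le_pos; [lra|]. apply Rlt_le, Rinv_0_lt_compat.
    repeat apply Rmult_lt_0_compat; try lra; apply pow_lt; lra. }
  lra.
Qed.
Lemma dG (u w x z b t0 : R) : 0 < u -> 0 < w -> 0 <= x -> 0 <= z -> 0 < b ->
  let v := exp t0 in
  let A := u^2 + v^2 + 2*u*v*x in let C := v^2 + w^2 + 2*v*w*z in
  let a := sqrt A in
  let A' := 2*v^2 + 2*u*v*x in let C' := 2*v^2 + 2*v*w*z in
  is_derive (fun t => (u^2 + exp t^2 + 2*u*exp t*x + b^2 - (exp t^2 + w^2 + 2*exp t*w*z)) / (2*sqrt(u^2 + exp t^2 + 2*u*exp t*x)*b)) t0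
   ((A' - C')/(2*a*b) - (A + b^2 - C)*A'/(4*a^3*b)).
Proof.
  intros Hu Hw Hx Hz Hb v A C a A' C'.
  assert (Hv : 0 < v) by apply exp_pos.
  assert (HA : 0 < A). { unfold A. assert (0 <= u*v*x) by (repeat apply Rmult_le_pos; lra). assert (0 < u^2) by (apply pow_lt; lra). assert (0 < v^2) by (apply pow_lt; lra). lra. }
  assert (Ha : 0 < a) by (apply sqrt_lt_R0; exact HA).
  assert (EA : u * (u * 1) + exp t0 * (exp t0 * 1) + 2 * u * exp t0 * x = A) by (unfold A, v; ring).
  auto_derive.
  - rewrite EA. fold a. split; [exact HA|]. split; [|exact I]. 
    apply Rgt_not_eq. apply Rmult_gt_0_compat; lra.
  - rewrite EA. fold a. fold v. unfold A', C', A, C. field. split; lra.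
Qed.

Lemma is_derive_acos (y : R) : -1 < y < 1 -> is_derive acos y (-1 / sqrt (1 - y²)).
Proof.
  intros Hy. apply is_derive_Reals.
  apply (derive_pt_eq_1 _ _ _ (derivable_pt_acos y Hy)).
  apply derive_pt_acos.
Qed.

Lemma sqrt_sq_eq (X : R) : 0 <= X -> sqrt X ^ 2 = X.
Proof. intros. rewrite <- Rsqr_pow2. apply Rsqr_sqrt. exact H. Qed.

Lemma main1 (u v w T01 T02 T12 : R) : 0 < u -> 0 < v -> 0 < w ->
  0 <= T01 <= PI / 2 -> 0 <= T02 <= PI / 2 -> 0 <= T12 <= PI / 2 ->
  ex_derive (fun t => Phi0 u (exp t) w T01 T02 T12) (ln v) /\
  Derive (fun t => Phi0 u (exp t) w T01 T02 T12) (ln v) <= 2 * Phi0 u v w T01 T02 T12.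
Proof.
  intros Hu Hv Hw H1 H2 H3.
  pose proof PI_RGT_0.
  assert (Hx : 0 <= cos T01 <= 1) by (split; [apply cos_ge_0; lra | apply COS_bound]).
  assert (Hy : 0 <= cos T02 <= 1) by (split; [apply cos_ge_0; lra | apply COS_bound]).
  assert (Hz : 0 <= cos T12 <= 1) by (split; [apply cos_ge_0; lra | apply COS_bound]).
  set (x := cos T01) in *. set (y := cos T02) in *. set (z := cos T12) in *.
  set (b := sqrt (u^2 + w^2 + 2*u*w*y)).
  assert (HB : 0 < u^2 + w^2 + 2*u*w*y).
  { assert (0 <= u*w*y) by (repeat apply Rmult_le_pos; lra). assert (0 < u^2) by (apply pow_lt; lra). assert (0 < w^2) by (apply pow_lt; lra). lra. }
  assert (Hb : 0 < b) by (apply sqrt_lt_R0; exact HB).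
  assert (Eb : b*b = u*u+w*w+2*u*w*y) by (unfold b; rewrite sqrt_sqrt; [ring|lra]).
  set (Gt := fun t => (u^2 + exp t^2 + 2*u*exp t*x + b^2 - (exp t^2 + w^2 + 2*exp t*w*z)) / (2*sqrt(u^2 + exp t^2 + 2*u*exp t*x)*b)).
  assert (Pos : forall p q r : R, 0 < p -> 0 < q -> 0 <= r -> 0 <= p^2 + q^2 + 2*p*q*r).
  { intros p q r Hp Hq Hr. assert (0 <= p*q*r) by (repeat apply Rmult_le_pos; lra). assert (0 < p^2) by (apply pow_lt; lra). assert (0 < q^2) by (apply pow_lt; lra). lra. }
  assert (Ef : forall t, Phi0 u (exp t) w T01 T02 T12 = acos (Gt t)).
  { intro t. unfold Phi0, tri_angle, center_dist, Gt. fold x y z. fold b.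
    pose proof (exp_pos t).
    rewrite (sqrt_sq_eq (u ^ 2 + exp t ^ 2 + 2 * u * exp t * x)) by (apply Pos; lra).
    rewrite (sqrt_sq_eq (exp t ^ 2 + w ^ 2 + 2 * exp t * w * z)) by (apply Pos; lra).
    reflexivity. }
  set (t0 := ln v).
  assert (Et0 : exp t0 = v) by (apply exp_ln; lra).
  pose proof (dG u w x z b t0 Hu Hw ltac:(lra) ltac:(lra) Hb) as HdG. cbv zeta in HdG.
  fold Gt in HdG. rewrite Et0 in HdG.
  set (a := sqrt (u^2 + v^2 + 2*u*v*x)) in *.
  assert (HA : 0 < u^2 + v^2 + 2*u*v*x).
  { assert (0 <= u*v*x) by (repeat apply Rmult_le_pos; lra). assert (0 < u^2) by (apply pow_lt; lra). assert (0 < v^2) by (apply pow_lt; lra). lra. }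
  assert (Ha : 0 < a) by (apply sqrt_lt_R0; exact HA).
  assert (Ea : a*a = u*u+v*v+2*u*v*x) by (unfold a; rewrite sqrt_sqrt; [ring|lra]).
  set (C := v*v+w*w+2*v*w*z).
  set (N := a*a + b*b - C).
  assert (EG0 : Gt t0 = N / (2*a*b)).
  { unfold Gt. rewrite Et0. fold a. unfold N, C. f_equal. rewrite Ea. ring. }
  set (c := sqrt C).
  assert (HC : 0 < C) by (unfold C; assert (0 <= v*w*z) by (repeat apply Rmult_le_pos; lra); nra).
  assert (Hc : 0 < c) by (apply sqrt_lt_R0; exact HC).
  assert (Ec : c*c = C) by (unfold c; rewrite sqrt_sqrt; lra).
  assert (0 < u*u) by nra. assert (0 < v*v) by nra. assert (0 < w*w) by nra.
  assert (0 <= u*v*x) by (repeat apply Rmult_le_pos; lra).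
  assert (0 <= u*w*y) by (repeat apply Rmult_le_pos; lra).
  assert (0 <= v*w*z) by (repeat apply Rmult_le_pos; lra).
  assert (0 <= u*v*(1-x)) by (repeat apply Rmult_le_pos; lra).
  assert (0 <= u*w*(1-y)) by (repeat apply Rmult_le_pos; lra).
  assert (0 <= v*w*(1-z)) by (repeat apply Rmult_le_pos; lra).
  unfold C in Ec.
  assert (Hav : v < a) by (apply Rsqr_incrst_0; unfold Rsqr; [rewrite Ea; lra | lra | lra]).
  assert (Hau : u < a) by (apply Rsqr_incrst_0; unfold Rsqr; [rewrite Ea; lra | lra | lra]).
  assert (Hbu : u < b) by (apply Rsqr_incrst_0; unfold Rsqr; [rewrite Eb; lra | lra | lra]).
  assert (Hbw : w < b) by (apply Rsqr_incrst_0; unfold Rsqr; [rewrite Eb; lra | lra | lra]).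
  assert (Hcv : v < c) by (apply Rsqr_incrst_0; unfold Rsqr; [rewrite Ec; lra | lra | lra]).
  assert (Hcw : w < c) by (apply Rsqr_incrst_0; unfold Rsqr; [rewrite Ec; lra | lra | lra]).
  assert (Ha2 : a <= u + v) by (apply Rsqr_incr_0_var; unfold Rsqr; [rewrite Ea; lra | lra]).
  assert (Hb2 : b <= u + w) by (apply Rsqr_incr_0_var; unfold Rsqr; [rewrite Eb; lra | lra]).
  assert (Hc2 : c <= v + w) by (apply Rsqr_incr_0_var; unfold Rsqr; [rewrite Ec; lra | lra]).
  fold C in Ec.
  assert (HH : 0 < 4*(a*a)*(b*b) - N*N).
  { replace (4*(a*a)*(b*b) - N*N) with ((c - a + b)*(c + a - b)*((a+b-c)*(a+b+c))) by (unfold N; rewrite <- Ec; ring).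
    repeat apply Rmult_lt_0_compat; lra. }
  assert (HG0 : -1 < N/(2*a*b) < 1).
  { assert (0 < 2*a*b) by (repeat apply Rmult_lt_0_compat; lra).
    assert (Hn : N*N < (2*a*b)*(2*a*b)) by lra.
    assert (N < 2*a*b) by nra. assert (- (2*a*b) < N) by nra.
    assert (E1 : N/(2*a*b) - 1 = (N - 2*a*b)/(2*a*b)) by (field; lra).
    assert (E2 : N/(2*a*b) + 1 = (N + 2*a*b)/(2*a*b)) by (field; lra).
    assert ((N - 2*a*b)/(2*a*b) < 0) by (apply Rdiv_neg_pos; lra).
    assert (0 < (N + 2*a*b)/(2*a*b)) by (apply Rdiv_lt_0_compat; lra).
    lra. }
  set (dG0 := ((2 * v ^ 2 + 2 * u * v * x - (2 * v ^ 2 + 2 * v * w * z)) / (2 * a * b) -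
        (u ^ 2 + v ^ 2 + 2 * u * v * x + b ^ 2 - (v ^ 2 + w ^ 2 + 2 * v * w * z)) * (2 * v ^ 2 + 2 * u * v * x) / (4 * a ^ 3 * b))) in HdG.
  assert (Hacos : is_derive acos (Gt t0) (-1 / sqrt (1 - (Gt t0)²))).
  { apply is_derive_acos. rewrite EG0. exact HG0. }
  pose proof (is_derive_comp acos Gt t0 _ _ Hacos HdG) as Hcomp.
  assert (Hf : is_derive (fun t => Phi0 u (exp t) w T01 T02 T12) t0 (dG0 * (-1 / sqrt (1 - (Gt t0)²)))).
  { apply is_derive_ext with (fun t => acos (Gt t)). { intro t. rewrite Ef. reflexivity. } exact Hcomp. }
  split. { eexists. exact Hf. }
  assert (ED : Derive (fun t => Phi0 u (exp t) w T01 T02 T12) t0 = dG0 * (-1 / sqrt (1 - (Gt t0)²))) by (apply is_derive_unique; exact Hf).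
  rewrite ED.
  assert (EP : Phi0 u v w T01 T02 T12 = acos (Gt t0)) by (rewrite <- Ef, Et0; reflexivity).
  rewrite EP, EG0.
  set (G0 := N/(2*a*b)) in *.
  assert (Hs : 0 < 1 - G0²) by (unfold Rsqr; nra).
  set (s := sqrt (1 - G0²)).
  assert (Hsp : 0 < s) by (apply sqrt_lt_R0; exact Hs).
  assert (Es : s*s = 1 - G0²) by (unfold s; rewrite sqrt_sqrt; lra).
  assert (Hkey : - dG0 <= 2*(1 - G0²)).
  { pose proof (final_alg u v w x y z a b Hu Hv Hw Hx Hy Hz Ha Hb Ea Eb) as FA. cbv zeta in FA.
    fold C N in FA. specialize (FA HH). fold G0 in FA.
    replace dG0 with ((2*v*v+2*u*v*x - (2*v*v+2*v*w*z))/(2*a*b) - N*(2*v*v+2*u*v*x)/(4*a^3*b)).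
    - exact FA.
    - unfold dG0, N, C. replace (b^2) with (b*b) by ring. rewrite Ea, Eb. field. lra. }
  assert (Hsin : s <= acos G0).
  { unfold s. rewrite <- sin_acos by lra. pose proof (acos_bound_lt G0 HG0). left. apply sin_lt_x. lra. }
  replace (dG0 * (-1 / s)) with ((- dG0) / s) by (field; lra).
  apply Rle_trans with (2*s).
  - apply Rmult_le_reg_r with s; [lra|]. unfold Rdiv. rewrite Rmult_assoc, Rinv_l by lra. nra.
  - lra.
Qed.

Lemma Phi0_sym (r0 p q T01 T02 T12 : R) :
  Phi0 r0 p q T01 T02 T12 = Phi0 r0 q p T02 T01 T12.
Proof.
  unfold Phi0, tri_angle.
  replace (center_dist q p T12) with (center_dist p q T12) by (unfold center_dist; f_equal; ring).
  f_equal. f_equal; ring.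
Qed.

Theorem lemma3p3 :
  exists C : R,
    forall (r0 r1 r2 T01 T02 T12 : R) (j : nat),
      0 < r0 -> 0 < r1 -> 0 < r2 ->
      0 <= T01 <= PI / 2 -> 0 <= T02 <= PI / 2 -> 0 <= T12 <= PI / 2 ->
      (j = 1%nat \/ j = 2%nat) ->
      ex_derive (Phi0_log j r0 r1 r2 T01 T02 T12) (ln (rho_of j r1 r2)) /\
      Derive (Phi0_log j r0 r1 r2 T01 T02 T12) (ln (rho_of j r1 r2))
        <= C * Phi0 r0 r1 r2 T01 T02 T12.
Proof.
  exists 2. intros r0 r1 r2 T01 T02 T12 j H0 H1 H2 HT1 HT2 HT3 [-> | ->].
  - exact (main1 r0 r1 r2 T01 T02 T12 H0 H1 H2 HT1 HT2 HT3).
  - change (Phi0_log 2 r0 r1 r2 T01 T02 T12) with (fun t => Phi0 r0 r1 (exp t) T01 T02 T12).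
    change (rho_of 2 r1 r2) with r2.
    destruct (main1 r0 r2 r1 T02 T01 T12 H0 H2 H1 HT2 HT1 HT3) as [Hex Hle].
    split.
    + apply ex_derive_ext with (fun t => Phi0 r0 (exp t) r1 T02 T01 T12); [|exact Hex].
      intro t. symmetry. apply Phi0_sym.
    + rewrite (Derive_ext (fun t => Phi0 r0 r1 (exp t) T01 T02 T12) (fun t => Phi0 r0 (exp t) r1 T02 T01 T12)).
      * rewrite (Phi0_sym r0 r1 r2). exact Hle.
      * intro t. apply Phi0_sym.
Qed.
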